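(* Fix $\alpha>1$ and parameters $\varepsilon_0,\delta_0,r,\varepsilon_1,\delta_1,\Delta^{\mathrm{disc}},\Delta>0$, and let $\phi_r$ be the weighted partition selection primitive defined from them. Let $X, X' \in \mathbb{R}_{\ge0}^U$ differ in at most one coordinate $u$, with $|X_u - X'_u| \le \Delta_\infty \le \Delta$. Then, provided $\delta_0+\delta_1\Delta_\infty^r<1$, $$\max\left\{D^{\delta}_\alpha(M_{\phi_r}(X)\|M_{\phi_r}(X')),\ D^{\delta}_\alpha(M_{\phi_r}(X')\|M_{\phi_r}(X))\right\}\le \varepsilon,$$ where $\delta = \delta_0+\delta_1\Delta_\infty^r$ and $\varepsilon = \varepsilon_0+\varepsilon_1\Delta_\infty^r$. In other words, for $\Delta_0 = 1$ and $\Delta_\infty\le\Delta$, $\phi_r$ satisfies $(\delta_0+\delta_1\Delta_\infty^r,\alpha,\varepsilon_0+\varepsilon_1\Delta_\infty^r)$-RDP.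
   Context: $\mathrm{Ber}(p)$: Bernoulli distribution. For $\alpha>1$, $D_\alpha(P\|Q)=\frac{1}{\alpha-1}\log\sum_x P(x)^\alpha Q(x)^{1-\alpha}$ and $D^\delta_\alpha(P\|Q)=\inf\{D_\alpha(P'\|Q'): P=(1-\delta)P'+\delta P'',\ Q=(1-\delta)Q'+\delta Q''\}$ over probability distributions. Define $L(q,\varepsilon,\delta) = \max\{p\in[q,1] : D^\delta_\alpha(\mathrm{Ber}(p)\|\mathrm{Ber}(q))\le\varepsilon \text{ and } D^\delta_\alpha(\mathrm{Ber}(q)\|\mathrm{Ber}(p))\le\varepsilon\}$. Let $N_{\mathrm{disc}} = \lceil \Delta/\Delta^{\mathrm{disc}}\rceil$. The discretized primitive $\psi_r:\mathbb{Z}_{\ge0}\to[0,1]$ is $\psi_r(0)=0$ and, for $n>0$, $$\psi_r(n) = \min_{i\in\{1,\dots,\min\{n,N_{\mathrm{disc}}\}\}} L\!\left(\psi_r(n-i),\ \varepsilon_0+\varepsilon_1(\Delta^{\mathrm{disc}}(i-1))^r,\ \delta_0+\delta_1(\Delta^{\mathrm{disc}}(i-1))^r\right).$$ The weighted primitive is $\phi_r(y) = \psi_r(\lfloor y/\Delta^{\mathrm{disc}}\rfloor)$ for $y\ge0$. For a weighted dataset $X\in\mathbb{R}_{\ge0}^U$, the mechanism $M_{\phi_r}(X)$ outputs the random subset of $U$ containing each $u$ independently with probability $\phi_r(X_u)$. $(\delta,\alpha,\varepsilon)$-RDP means $D^\delta_\alpha(M(X)\|M(X'))\le\varepsilon$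 for all neighboring pairs in both orders. *)

(* Defs.v *)
From HB Require Import structures.
From mathcomp Require Import all_boot all_order all_algebra.
From mathcomp Require Import all_classical all_reals all_analysis.
Set Implicit Arguments. Unset Strict Implicit. Unset Printing Implicit Defensive.
Import Order.TTheory GRing.Theory Num.Theory.
Local Open Scope classical_set_scope.
Local Open Scope ring_scope.

Section Defs.
Variable R : realType.

Definition is_distr (T : finType) (P : T -> R) : Prop :=
  (forall x, 0 <= P x) /\ \sum_(x : T) P x = 1.

Definition ber (p : R) : bool -> R := fun b => if b then p else 1 - p.

Definition renyi_term (a : R) (px qx : R) : \bar R :=
  if qx == 0 then (if px == 0 then 0%E else +oo%E)
  else (px `^ a * qx `^ (1 - a))%:E.

Definition renyi (a : R) (T : finType) (P Q : T -> R) : \bar R :=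
  match (\sum_(x : T) renyi_term a (P x) (Q x))%E with
  | r%:E => (ln r / (a - 1))%:E
  | _ => +oo%E
  end.

Definition renyi_approx (a d : R) (T : finType) (P Q : T -> R) : \bar R :=
  ereal_inf [set e | exists P' P'' Q' Q'' : T -> R,
    [/\ is_distr P', is_distr P'', is_distr Q', is_distr Q'' &
        [/\ (forall x, P x = (1 - d) * P' x + d * P'' x),
             (forall x, Q x = (1 - d) * Q' x + d * Q'' x) &
             e = renyi a P' Q']]].

Definition Lfun (a q eps d : R) : R :=
  sup [set p : R | [/\ q <= p, p <= 1,
        (renyi_approx a d (ber p) (ber q) <= eps%:E)%E &
        (renyi_approx a d (ber q) (ber p) <= eps%:E)%E]].

Definition Ndisc (D Dd : R) : nat := `|Num.ceil (D / Dd)|%N.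

(* psi_seq n = [:: psi 0; ...; psi n]; the min over i in {1..min(n,Ndisc)}
   is written with index j = i - 1 ranging over 'I_(min(n,Ndisc)). *)
Fixpoint psi_seq (a e0 d0 r e1 d1 Dd D : R) (n : nat) : seq R :=
  match n with
  | 0 => [:: 0]
  | m.+1 =>
      let s := psi_seq a e0 d0 r e1 d1 Dd D m in
      rcons s (\big[Order.min/1]_(j < minn m.+1 (Ndisc D Dd))
                 Lfun a (nth 0 s (m.+1 - j.+1))
                   (e0 + e1 * (Dd * j%:R) `^ r)
                   (d0 + d1 * (Dd * j%:R) `^ r))
  end.

Definition psi (a e0 d0 r e1 d1 Dd D : R) (n : nat) : R :=
  nth 0 (psi_seq a e0 d0 r e1 d1 Dd D n) n.

Definition phi (a e0 d0 r e1 d1 Dd D : R) (y : R) : R :=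
  psi a e0 d0 r e1 d1 Dd D `|Num.floor (y / Dd)|%N.

(* Output distribution of M_phi(X) on subsets of U: independent inclusion. *)
Definition mech (U : finType) (f : R -> R) (X : U -> R) : {set U} -> R :=
  fun S => \prod_(v : U) (if v \in S then f (X v) else 1 - f (X v)).

End Defs.

(* Main.v *)
Require Import Defs.
From HB Require Import structures.
From mathcomp Require Import all_boot all_order all_algebra.
From mathcomp Require Import all_classical all_reals all_analysis.
From mathcomp Require Import ring lra.
Import Order.TTheory GRing.Theory Num.Theory.
Set Implicit Arguments. Unset Strict Implicit. Unset Printing Implicit Defensive.
Local Open Scope ring_scope.

Section P0.
Variable R : realType.

Lemma powRE_pos (u c : R) : 0 < u -> u `^ c = expR (c * ln u).
Proof. by move=> u0; rewrite /powR gt_eqF. Qed.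

Lemma ln_le_sub1 {u : R} : 0 < u -> ln u <= u - 1.
Proof.
move=> u0; have := expR_ge1Dx (ln u); rewrite lnK ?posrE //; lra.
Qed.

Lemma bern_neg (c u : R) : c <= 0 -> 0 < u -> 1 + c * (u - 1) <= u `^ c.
Proof.
move=> c0 u0; rewrite powRE_pos //.
apply: le_trans (expR_ge1Dx _).
have := ln_le_sub1 u0; nra.
Qed.

Lemma bern_pos (c u : R) : 1 <= c -> 0 <= u -> 1 + c * (u - 1) <= u `^ c.
Proof.
move=> c1 u0; have c0 : 0 < c by lra.
have [->|u0'] := eqVneq u 0.
  rewrite powR0 ?gt_eqF //; lra.
have upos : 0 < u by rewrite lt_neqAle eq_sym u0' u0.
rewrite -mulr_powRB1 //.
have -> : u `^ (c - 1) = (u^-1) `^ (1 - c).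
  rewrite !powRE_pos ?invr_gt0 //; rewrite lnV ?posrE //; congr expR; ring.
have h := @bern_neg (1 - c) (u^-1) ltac:(lra) ltac:(by rewrite invr_gt0).
have h2 := ler_wpM2l (ltW upos) h.
apply: le_trans h2; rewrite le_eqVlt; apply/orP; left; apply/eqP.
field; by rewrite gt_eqF.
Qed.

Definition domc (c y : R) := (1 <= c /\ 0 <= y) \/ (c <= 0 /\ 0 < y).

Lemma bern {c v : R} : domc c v -> 1 + c * (v - 1) <= v `^ c.
Proof. by case=> -[]; [apply: bern_pos | apply: bern_neg]. Qed.

Lemma tangent (c : R) {m y : R} : domc c y -> 0 < m ->
  m `^ c + c * (m `^ c / m) * (y - m) <= y `^ c.
Proof.
move=> dy m0.
have dv : domc c (y / m).
  case: dy => -[h1 h2]; [left|right]; split => //;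
    [exact: divr_ge0 (ltW m0) | exact: divr_gt0].
have yge0 : 0 <= y by case: dy => -[_ h]; lra.
set v := y / m in dv *.
have -> : y = m * v by rewrite /v; field; rewrite gt_eqF.
rewrite powRM ?(ltW m0) ?divr_ge0 ?(ltW m0) //.
have h := bern dv.
have mc0 : 0 <= m `^ c by exact: powR_ge0.
have := ler_wpM2l mc0 h.
apply: le_trans; rewrite le_eqVlt; apply/orP; left; apply/eqP.
field; by rewrite gt_eqF.
Qed.

Lemma htan {c m y : R} : domc c m -> domc c y ->
  (1 <= m <= y) \/ (y <= m <= 1) -> m `^ c + c * (y - m) <= y `^ c.
Proof.
move=> dm dy hmy.
have [m0|m0] := eqVneq m 0.
  case: hmy => /andP[h1 h2]; first by move: h1; rewrite m0; lra.
  have y0 : y = 0 by case: dy => -[_ hy]; lra.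
  by rewrite y0 m0 subrr mulr0 addr0.
have mpos : 0 < m.
  rewrite lt_neqAle eq_sym m0 /=; case: dm => -[_ h]; lra.
have t := tangent dy mpos.
set k := m `^ c / m in t.
apply: le_trans t.
have hk : (1 <= c -> (1 <= m -> 1 <= k) /\ (m <= 1 -> k <= 1)) /\
          (c <= 0 -> (1 <= m -> k <= 1) /\ (m <= 1 -> 1 <= k)).
  split=> hc; split=> hm.
  - by rewrite /k ler_pdivlMr // mul1r le1r_powR.
  - by rewrite /k ler_pdivrMr // mul1r ge1r_powR // mpos.
  - by rewrite /k ler_pdivrMr // mul1r ler1_powR //; lra.
  - by rewrite /k ler_pdivlMr // mul1r ger1_powR // ?mpos //; lra.
have hc : 1 <= c \/ c <= 0 by case: dm => -[? _]; [left|right].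
rewrite lerD2l.
case: hc => hc; case: hmy => /andP[h1 h2].
- have := (hk.1 hc).1 h1 => hk1.
  have e1 : 0 <= c by lra. have e2 : 0 <= y - m by lra. have e3 : 0 <= k - 1 by lra.
  have := mulr_ge0 (mulr_ge0 e1 e2) e3; nra.
- have := (hk.1 hc).2 h2 => hk1.
  have e1 : 0 <= c by lra. have e2 : 0 <= m - y by lra. have e3 : 0 <= 1 - k by lra.
  have := mulr_ge0 (mulr_ge0 e1 e2) e3; nra.
- have := (hk.2 hc).1 h1 => hk1.
  have e1 : 0 <= - c by lra. have e2 : 0 <= y - m by lra. have e3 : 0 <= 1 - k by lra.
  have := mulr_ge0 (mulr_ge0 e1 e2) e3; nra.
- have := (hk.2 hc).2 h2 => hk1.
  have e1 : 0 <= - c by lra. have e2 : 0 <= m - y by lra. have e3 : 0 <= k - 1 by lra.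
  have := mulr_ge0 (mulr_ge0 e1 e2) e3; nra.
Qed.

Lemma spread (c w1 w2 s s' t t' : R) : 0 <= w1 -> 0 <= w2 ->
  w1 * s + w2 * t = w1 * s' + w2 * t' ->
  1 <= s' <= s -> t <= t' <= 1 -> domc c t -> (1 <= c \/ c <= 0) ->
  w1 * s' `^ c + w2 * t' `^ c <= w1 * s `^ c + w2 * t `^ c.
Proof.
move=> w10 w20 E /andP[hs1 hs2] /andP[ht1 ht2] dt hc.
have dom1 : forall y, 1 <= y -> domc c y.
  by move=> y hy; case: hc => hc; [left|right]; split => //; lra.
have dt' : domc c t' by case: dt => -[h1 h2]; [left|right]; split => //; lra.
have h1 := htan (dom1 _ hs1) (dom1 _ (le_trans hs1 hs2)) (or_introl (introT andP (conj hs1 hs2))).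
have h2 := htan dt' dt (or_intror (introT andP (conj ht1 ht2))).
have h1' := ler_wpM2l w10 h1.
have h2' := ler_wpM2l w20 h2.
have Z : c * (w1 * (s - s') + w2 * (t - t')) = 0.
  by rewrite (_ : w1 * (s - s') + w2 * (t - t') = 0) ?mulr0 //; lra.
nra.
Qed.

End P0.

Section P1.
Variable R : realType.
Variable a : R.
Hypothesis ha : 1 < a.

Definition Tr (x z : R) := x `^ a * z `^ (1 - a) + (1 - x) `^ a * (1 - z) `^ (1 - a).

Lemma powR_inv (w c : R) : 0 < w -> (w^-1) `^ c = (w `^ c)^-1.
Proof.
move=> w0; rewrite !powRE_pos ?invr_gt0 // lnV ?posrE // -expRN; congr expR; ring.
Qed.

Lemma Idn (c w y : R) : 0 < w -> 0 <= y -> y `^ c * w `^ (1 - c) = w * (y / w) `^ c.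
Proof.
move=> w0 y0; rewrite powRM ?invr_ge0 ?(ltW w0) // powR_inv //.
have -> : w `^ (1 - c) = w * (w `^ c)^-1.
  rewrite !powRE_pos // -expRN (_ : (1 - c) * ln w = ln w + - (c * ln w)); last by ring.
  by rewrite expRD lnK ?posrE.
ring.
Qed.

Lemma Idn2 (c w y : R) : 0 < w -> 0 <= y -> w `^ c * y `^ (1 - c) = w * (y / w) `^ (1 - c).
Proof.
move=> w0 y0; rewrite -Idn // (_ : 1 - (1 - c) = c); [by rewrite mulrC | ring].
Qed.

Lemma antitone_neg (b z z' : R) : b <= 0 -> 0 < z -> z <= z' -> z' `^ b <= z `^ b.
Proof.
move=> b0 z0 zz; have z'0 : 0 < z' by exact: lt_le_trans z0 zz.
rewrite !powRE_pos // ler_expR.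
have : ln z <= ln z' by rewrite ler_ln ?posrE.
nra.
Qed.

Lemma le_divr (w x y : R) : 0 < w -> x <= y -> x / w <= y / w.
Proof. by move=> w0 h; rewrite ler_pM2r ?invr_gt0. Qed.

Lemma le1_div (w x : R) : 0 < w -> w <= x -> 1 <= x / w.
Proof. by move=> w0 h; rewrite ler_pdivlMr // mul1r. Qed.

Lemma div_le1 (w x : R) : 0 < w -> x <= w -> x / w <= 1.
Proof. by move=> w0 h; rewrite ler_pdivrMr // mul1r. Qed.

End P1.

Section P1.
Variable R : realType.
Variable a : R.
Hypothesis ha : 1 < a.
Local Notation Tr := (Tr a).
Lemma wdiv (w y : R) : 0 < w -> w * (y / w) = y.
Proof. by move=> w0; rewrite mulrC divfK // gt_eqF. Qed.

Lemma M1 (x x' z : R) : 0 < z < 1 -> z <= x' -> x' <= x -> x <= 1 -> Tr x' z <= Tr x z.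
Proof.
have ha1 : 0 < a - 1 by rewrite subr_gt0.
move=> /andP[z0 z1] h1 h2 h3.
have z1' : 0 < 1 - z by lra.
rewrite /Tr !Idn ?subr_ge0 //; try lra.
apply: (@spread R a z (1 - z) (x/z) (x'/z) ((1-x)/(1-z)) ((1-x')/(1-z))).
- lra.
- lra.
- rewrite !wdiv //; lra.
- apply/andP; split; [apply: le1_div; lra | apply: le_divr; lra].
- apply/andP; split; [apply: le_divr; lra | apply: div_le1; lra].
- left; split; [exact: ltW ha | apply: divr_ge0; lra].
- left; exact: ltW ha.
Qed.

Lemma M2 (x z z' : R) : 0 < x <= 1 -> 0 < z -> z <= z' -> z' <= x -> z' < 1 -> Tr x z' <= Tr x z.
Proof.
have ha1 : 0 < a - 1 by rewrite subr_gt0.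
move=> /andP[x0 x1] z0 h1 h2 h3.
have [->|xn1] := eqVneq x 1.
  rewrite /Tr subrr !powR0 ?mul0r ?addr0 ?powR1 ?mul1r; try (apply/eqP; lra).
  apply: antitone_neg => //; lra.
have x1' : 0 < 1 - x by rewrite subr_gt0 lt_neqAle xn1 x1.
rewrite /Tr !Idn2 ?subr_ge0 //; try lra.
rewrite addrC [X in _ <= X]addrC.
apply: (@spread R (1 - a) (1 - x) x ((1-z)/(1-x)) ((1-z')/(1-x)) (z/x) (z'/x)).
- lra.
- lra.
- rewrite !wdiv //; lra.
- apply/andP; split; [apply: le1_div; lra | apply: le_divr; lra].
- apply/andP; split; [apply: le_divr; lra | apply: div_le1; lra].
- right; split; [rewrite subr_le0; exact: ltW ha | apply: divr_gt0; lra].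
- right; rewrite subr_le0; exact: ltW ha.
Qed.

Lemma M3 (x x' z : R) : 0 <= z -> z <= x' -> x' <= x -> x < 1 -> Tr z x' <= Tr z x.
Proof.
have ha1 : 0 < a - 1 by rewrite subr_gt0.
move=> z0 h1 h2 h3.
have [->|zn0] := eqVneq z 0.
  rewrite /Tr subr0 !powR0 ?mul0r ?add0r ?powR1 ?mul1r; try (apply/eqP; lra).
  apply: antitone_neg; lra.
have zpos : 0 < z by rewrite lt_neqAle eq_sym zn0 z0.
have z1' : 0 < 1 - z by lra.
rewrite /Tr !Idn2 ?subr_ge0 //; try lra.
apply: (@spread R (1 - a) z (1 - z) (x/z) (x'/z) ((1-x)/(1-z)) ((1-x')/(1-z))).
- lra.
- lra.
- rewrite !wdiv //; lra.
- apply/andP; split; [apply: le1_div; lra | apply: le_divr; lra].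
- apply/andP; split; [apply: le_divr; lra | apply: div_le1; lra].
- right; split; [rewrite subr_le0; exact: ltW ha | apply: divr_gt0; lra].
- right; rewrite subr_le0; exact: ltW ha.
Qed.

Lemma M4 (x z z' : R) : 0 <= z -> z <= z' -> z' <= x -> x < 1 -> 0 < x -> Tr z' x <= Tr z x.
Proof.
have ha1 : 0 < a - 1 by rewrite subr_gt0.
move=> z0 h1 h2 h3 x0.
have x1' : 0 < 1 - x by lra.
rewrite /Tr !Idn ?subr_ge0 //; try lra.
rewrite addrC [X in _ <= X]addrC.
apply: (@spread R a (1 - x) x ((1-z)/(1-x)) ((1-z')/(1-x)) (z/x) (z'/x)).
- lra.
- lra.
- rewrite !wdiv //; lra.
- apply/andP; split; [apply: le1_div; lra | apply: le_divr; lra].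
- apply/andP; split; [apply: le_divr; lra | apply: div_le1; lra].
- left; split; [exact: ltW ha | apply: divr_ge0; lra].
- left; exact: ltW ha.
Qed.

Lemma Tr_gt0 (x z : R) : 0 <= x <= 1 -> 0 < z < 1 -> 0 < Tr x z.
Proof.
have ha1 : 0 < a - 1 by rewrite subr_gt0.
move=> /andP[x0 x1] /andP[z0 z1].
have h1 : 0 <= x `^ a * z `^ (1 - a) by rewrite mulr_ge0 ?powR_ge0.
have h2 : 0 <= (1 - x) `^ a * (1 - z) `^ (1 - a) by rewrite mulr_ge0 ?powR_ge0.
rewrite /Tr.
have [->|xn0] := eqVneq x 0.
  rewrite subr0 powR1 mul1r powR0 ?mul0r ?add0r; last by apply/eqP; lra.
  by apply: powR_gt0; lra.
have xp : 0 < x by rewrite lt_neqAle eq_sym xn0 x0.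
have : 0 < x `^ a * z `^ (1 - a) by rewrite mulr_gt0 // powR_gt0.
lra.
Qed.

Lemma renyi_ber (x z : R) : 0 <= x <= 1 -> 0 < z < 1 ->
  renyi a (ber x) (ber z) = (ln (Tr x z) / (a - 1))%:E.
Proof.
have ha1 : 0 < a - 1 by rewrite subr_gt0.
move=> /andP[x0 x1] /andP[z0 z1].
rewrite /renyi big_bool /= /renyi_term /ber.
rewrite (gt_eqF z0) (_ : (1 - z == 0) = false); last by apply/negbTE; apply/eqP; lra.
by rewrite -EFinD.
Qed.

Lemma renyi_ber_z0 (x : R) : 0 < x -> x <= 1 -> renyi a (ber x) (ber 0) = +oo%E.
Proof.
have ha1 : 0 < a - 1 by rewrite subr_gt0.
move=> x0 x1.
rewrite /renyi big_bool /= /renyi_term /ber eqxx (gt_eqF x0) subr0.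
rewrite (_ : (1 == 0 :> R) = false) ?oner_eq0 //= ?addye //.
Qed.

Lemma renyi_ber_x1 (z : R) : 0 <= z -> z < 1 -> renyi a (ber z) (ber 1) = +oo%E.
Proof.
have ha1 : 0 < a - 1 by rewrite subr_gt0.
move=> z0 z1.
rewrite /renyi big_bool /= /renyi_term /ber subrr eqxx oner_eq0.
rewrite (_ : (1 - z == 0) = false) /= ?addey //; by apply/negbTE; apply/eqP; lra.
Qed.

Lemma renyi_self (T : finType) (P : T -> R) : is_distr P -> renyi a P P = 0%:E.
Proof.
have ha1 : 0 < a - 1 by rewrite subr_gt0.
move=> [P0 P1].
rewrite /renyi.
have -> : (\sum_(x : T) renyi_term a (P x) (P x) = (\sum_(x : T) P x)%:E)%E.
  rewrite -sumEFin.
  apply: eq_bigr => x _; rewrite /renyi_term.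
  have [->|pn0] := eqVneq (P x) 0; first by [].
  rewrite -powRD; last by apply/implyP => _.
  by rewrite (_ : a + (1 - a) = 1) ?powRr1 //; ring.
by rewrite P1 /= ln1 mul0r.
Qed.

Lemma F_le (T1 T2 : R) : 0 < T1 -> T1 <= T2 -> ((ln T1 / (a - 1))%:E <= (ln T2 / (a - 1))%:E)%E.
Proof.
have ha1 : 0 < a - 1 by rewrite subr_gt0.
move=> t0 t12; rewrite lee_fin ler_pM2r ?invr_gt0 ?subr_gt0 //.
by rewrite ler_ln ?posrE //; lra.
Qed.

End P1.

Section P2.
Variable R : realType.
Variable a : R.
Hypothesis ha : 1 < a.

Lemma ber_distr (p : R) : 0 <= p <= 1 -> is_distr (ber p).
Proof.
move=> /andP[p0 p1]; split; first by case; rewrite /ber; lra.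
by rewrite big_bool /ber /=; ring.
Qed.

Lemma distr_ber (P : bool -> R) : is_distr P -> P = ber (P true) /\ 0 <= P true <= 1.
Proof.
move=> [P0 P1]; move: P1; rewrite big_bool => P1'.
have P1 : P true + P false = 1 by exact: P1'.
have h0 : 0 <= P true by exact: P0.
have h1 : 0 <= P false by exact: P0.
split; last by apply/andP; split; lra.
apply: funext => -[]; rewrite /ber /= //; lra.
Qed.

Lemma RA_ub (d p q x y z w : R) : 0 <= x <= 1 -> 0 <= y <= 1 -> 0 <= z <= 1 -> 0 <= w <= 1 ->
  p = (1 - d) * x + d * y -> q = (1 - d) * z + d * w ->
  (renyi_approx a d (ber p) (ber q) <= renyi a (ber x) (ber z))%E.
Proof.
move=> hx hy hz hw hp hq.
apply: ereal_inf_lbound.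
exists (ber x), (ber y), (ber z), (ber w); split; try exact: ber_distr.
split=> //; case; rewrite /ber ?hp ?hq; ring.
Qed.

Lemma RA_lb (d p q : R) (K : \bar R) :
  (forall x y z w : R, 0 <= x <= 1 -> 0 <= y <= 1 -> 0 <= z <= 1 -> 0 <= w <= 1 ->
     p = (1 - d) * x + d * y -> q = (1 - d) * z + d * w -> (K <= renyi a (ber x) (ber z))%E) ->
  (K <= renyi_approx a d (ber p) (ber q))%E.
Proof.
move=> H; apply: le_ereal_inf_tmp => e [P' [P'' [Q' [Q'' [dP' dP'' dQ' dQ'' [eP eQ ->]]]]]].
have [E1 b1] := distr_ber dP'; have [E2 b2] := distr_ber dP''.
have [E3 b3] := distr_ber dQ'; have [E4 b4] := distr_ber dQ''.
rewrite E1 E3; apply: (H _ (P'' true) _ (Q'' true)) => //.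
- by have := eP true.
- by have := eQ true.
Qed.

Lemma RA_refl (d p : R) : 0 <= p <= 1 -> (renyi_approx a d (ber p) (ber p) <= 0%:E)%E.
Proof.
move=> hp; rewrite -(renyi_self ha (ber_distr hp)).
apply: (RA_ub hp hp hp hp); ring.
Qed.

Lemma RA_zero (d p q : R) : 0 < d < 1 -> 0 <= q -> q <= p -> p <= 1 -> p - d <= q ->
  (renyi_approx a d (ber p) (ber q) <= 0%:E)%E /\ (renyi_approx a d (ber q) (ber p) <= 0%:E)%E.
Proof.
move=> /andP[d0 d1] q0 qp p1 hpq.
have d1' : 0 < 1 - d by lra.
have [pd|pd] := lerP p d.
  have hc : 0 <= (0:R) <= 1 by rewrite lexx ler01.
  have hyp : 0 <= p / d <= 1 by apply/andP; split; [apply: divr_ge0; lra | apply: div_le1; lra].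
  have hyq : 0 <= q / d <= 1 by apply/andP; split; [apply: divr_ge0; lra | apply: div_le1; lra].
  have ep : p = (1 - d) * 0 + d * (p / d) by rewrite wdiv //; ring.
  have eq : q = (1 - d) * 0 + d * (q / d) by rewrite wdiv //; ring.
  rewrite -(renyi_self ha (ber_distr hc)); split.
  - exact: (RA_ub hc hyp hc hyq ep eq).
  - exact: (RA_ub hc hyq hc hyp eq ep).
pose c := (p - d) / (1 - d).
have hc : 0 <= c <= 1 by apply/andP; split; [apply: divr_ge0; lra | apply: div_le1; lra].
have h1 : 0 <= (1:R) <= 1 by rewrite lexx ler01.
have hyq : 0 <= (q - (p - d)) / d <= 1 by apply/andP; split; [apply: divr_ge0; lra | apply: div_le1; lra].
have ep : p = (1 - d) * c + d * 1 by rewrite /c wdiv //; ring.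
have eq : q = (1 - d) * c + d * ((q - (p - d)) / d) by rewrite /c !wdiv //; ring.
rewrite -(renyi_self ha (ber_distr hc)); split.
- exact: (RA_ub hc h1 hc hyq ep eq).
- exact: (RA_ub hc hyq hc h1 eq ep).
Qed.

Lemma RA_canon (d p q : R) : 0 < d < 1 -> 0 <= q -> q + d < p -> p <= 1 ->
  renyi_approx a d (ber p) (ber q) = renyi a (ber ((p - d) / (1 - d))) (ber (q / (1 - d))) /\
  renyi_approx a d (ber q) (ber p) = renyi a (ber (q / (1 - d))) (ber ((p - d) / (1 - d))).
Proof.
move=> /andP[d0 d1] q0 hqp p1.
have d1' : 0 < 1 - d by lra.
set xm := (p - d) / (1 - d); set zm := q / (1 - d).
have hxm : 0 <= xm <= 1 by apply/andP; split; [apply: divr_ge0; lra | apply: div_le1; lra].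
have hzm : 0 <= zm <= 1 by apply/andP; split; [apply: divr_ge0; lra | apply: div_le1; lra].
have xm0 : 0 < xm by apply: divr_gt0; lra.
have zm1 : zm < 1 by rewrite /zm ltr_pdivrMr // mul1r; lra.
have zmxm : zm < xm by rewrite /zm /xm ltr_pM2r ?invr_gt0 //; lra.
have h1 : 0 <= (1:R) <= 1 by rewrite lexx ler01.
have h0 : 0 <= (0:R) <= 1 by rewrite lexx ler01.
have ep : p = (1 - d) * xm + d * 1 by rewrite /xm wdiv //; ring.
have eq : q = (1 - d) * zm + d * 0 by rewrite /zm wdiv //; ring.
have Hx : forall x y, 0 <= x <= 1 -> 0 <= y <= 1 -> p = (1 - d) * x + d * y -> xm <= x.
  move=> x y /andP[x0 x1] /andP[y0 y1] e; rewrite /xm ler_pdivrMr //; nra.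
have Hz : forall z w, 0 <= z <= 1 -> 0 <= w <= 1 -> q = (1 - d) * z + d * w -> z <= zm.
  move=> z w /andP[z0 z1] /andP[w0 w1] e; rewrite /zm ler_pdivlMr //; nra.
split; apply/le_anti/andP; split.
- exact: (RA_ub hxm h1 hzm h0 ep eq).
- apply: RA_lb => x y z w hx hy hz hw ex ez.
  have xx := Hx _ _ hx hy ex; have zz := Hz _ _ hz hw ez.
  have /andP[x0 x1] := hx; have /andP[z0 z1] := hz.
  have [->|zn0] := eqVneq z 0.
    by rewrite renyi_ber_z0 ?leey //; lra.
  have zp : 0 < z by rewrite lt_neqAle eq_sym zn0 z0.
  rewrite renyi_ber //; last by apply/andP; split; lra.
  rewrite renyi_ber //; last by apply/andP; split; lra.
  apply: F_le => //; first by apply: Tr_gt0 => //; apply/andP; split; lra.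
  apply: (@le_trans _ _ (Tr a xm z)).
    apply: M2 => //; try lra; apply/andP; split; lra.
  apply: M1 => //; try lra; apply/andP; split; lra.
- exact: (RA_ub hzm h0 hxm h1 eq ep).
- apply: RA_lb => z w x y hz hw hx hy ez ex.
  have xx := Hx _ _ hx hy ex; have zz := Hz _ _ hz hw ez.
  have /andP[x0 x1] := hx; have /andP[z0 z1] := hz.
  have [->|xn1] := eqVneq x 1.
    by rewrite renyi_ber_x1 ?leey //; lra.
  have xl1 : x < 1 by rewrite lt_neqAle xn1 x1.
  rewrite renyi_ber //; last by apply/andP; split; lra.
  rewrite renyi_ber //; last by apply/andP; split; lra.
  apply: F_le => //; first by apply: Tr_gt0 => //; apply/andP; split; lra.
  apply: (@le_trans _ _ (Tr a z xm)).
    apply: M4 => //; lra.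
  apply: M3 => //; lra.
Qed.

End P2.

Section P3.
Variable R : realType.
Variable a : R.
Hypothesis ha : 1 < a.
Local Notation Tr := (Tr a).

Lemma E_le_F (T e : R) : 0 < T -> T <= expR ((a - 1) * e) -> ((ln T / (a - 1))%:E <= e%:E)%E.
Proof.
have ha1 : 0 < a - 1 by rewrite subr_gt0.
move=> T0 h; rewrite lee_fin ler_pdivrMr //.
have : ln T <= ln (expR ((a - 1) * e)) by rewrite ler_ln ?posrE ?expR_gt0.
by rewrite expRK mulrC.
Qed.

Lemma F_le_E (T e : R) : 0 < T -> ((ln T / (a - 1))%:E <= e%:E)%E -> T <= expR ((a - 1) * e).
Proof.
have ha1 : 0 < a - 1 by rewrite subr_gt0.
move=> T0; rewrite lee_fin ler_pdivrMr // => h.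
have e1 : expR (ln T) = T by rewrite lnK // posrE.
by rewrite -{1}e1 ler_expR mulrC.
Qed.

Lemma approx_le (T E C : R) : 0 <= C ->
  (forall eta, 0 < eta -> exists del, [/\ 0 <= del, del < eta & T <= E + C * del]) -> T <= E.
Proof.
move=> C0 H; apply/ler_addgt0Pr => e e0.
have C1 : 0 < C + 1 by lra.
have [del [d0 d1 hT]] := H (e / (C + 1)) (divr_gt0 e0 C1).
apply: le_trans hT _; rewrite lerD2l.
move: d1; rewrite ltr_pdivlMr // => d1.
nra.
Qed.

Lemma Lip1 (X x0 z : R) : 0 < z < 1 -> 0 <= x0 -> x0 <= X -> X <= 1 ->
  Tr X z <= Tr x0 z + a * z `^ (1 - a) * (X - x0).
Proof.
have ha1 : 0 < a - 1 by rewrite subr_gt0.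
move=> /andP[z0 z1] x00 hx hX.
have [X0|X0] := eqVneq X 0.
  have -> : x0 = X by lra.
  by rewrite subrr mulr0 addr0.
have Xp : 0 < X by rewrite lt_neqAle eq_sym X0 /=; lra.
have dom : domc a x0 by left; split => //; exact: ltW ha.
have t := tangent dom Xp.
have k1 : X `^ a / X <= 1 by rewrite ler_pdivrMr // mul1r ge1r_powR // ?Xp //; exact: ltW ha.
have hneg : (1 - X) `^ a <= (1 - x0) `^ a.
  by apply: ge0_ler_powR; rewrite ?nnegrE; lra.
have zA : 0 <= z `^ (1 - a) by exact: powR_ge0.
have zB : 0 <= (1 - z) `^ (1 - a) by exact: powR_ge0.
have a0 : 0 <= a by lra.
have e2 : 0 <= X - x0 by lra.
have e3 : 0 <= 1 - X `^ a / X by lra.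
have h1 : X `^ a - x0 `^ a <= a * (X - x0).
  have := mulr_ge0 (mulr_ge0 a0 e2) e3; nra.
have := ler_wpM2l zA h1.
have h2 : (1 - X) `^ a - (1 - x0) `^ a <= 0 by lra.
have := ler_wpM2l zB h2.
rewrite /Tr; nra.
Qed.

Lemma Lip2 (X x0 z : R) : 0 <= z -> z < 1 -> 0 < x0 -> x0 <= X -> X < 1 ->
  Tr z X <= Tr z x0 + (1 - z) `^ a * (a - 1) * ((1 - X) `^ (1 - a) / (1 - X)) * (X - x0).
Proof.
have ha1 : 0 < a - 1 by rewrite subr_gt0.
move=> z0 z1 x00 hx hX.
have h1 : X `^ (1 - a) <= x0 `^ (1 - a) by apply: antitone_neg => //; lra.
have m0 : 0 < 1 - X by lra.
have dom : domc (1 - a) (1 - x0) by right; split; lra.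
have t := tangent dom m0.
have zA : 0 <= z `^ a by exact: powR_ge0.
have zB : 0 <= (1 - z) `^ a by exact: powR_ge0.
have h2 : (1 - X) `^ (1 - a) - (1 - x0) `^ (1 - a) <=
    (a - 1) * ((1 - X) `^ (1 - a) / (1 - X)) * (X - x0) by lra.
have := ler_wpM2l zB h2.
have h3 : X `^ (1 - a) - x0 `^ (1 - a) <= 0 by lra.
have := ler_wpM2l zA h3.
rewrite /Tr; nra.
Qed.

End P3.

Section P3b.
Variable R : realType.
Variable a : R.
Hypothesis ha : 1 < a.
Local Notation Tr := (Tr a).

Lemma closed_L (d q e : R) : 0 < d < 1 -> 0 <= q <= 1 -> 0 <= e ->
  forall p, q <= p -> p <= Defs.Lfun a q e d ->
  (renyi_approx a d (ber p) (ber q) <= e%:E)%E /\ (renyi_approx a d (ber q) (ber p) <= e%:E)%E.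
Proof.
have ha1 : 0 < a - 1 by rewrite subr_gt0.
move=> /andP[d0 d1] /andP[q0 q1] e0 p hqp hpL.
have d1' : 0 < 1 - d by lra.
have hd : 0 < d < 1 by apply/andP; split.
have hq : 0 <= q <= 1 by apply/andP; split.
rewrite /Defs.Lfun in hpL.
set S := [set p : R | _]%classic in hpL.
have Sq : S q.
  by split => //; apply: (@le_trans _ _ 0%:E); (try exact: RA_refl); rewrite lee_fin.
have ubS : ubound S 1 by move=> y [].
have hs : has_sup S by split; [exists q | exists 1].
have L1 : sup S <= 1 by apply: ge_sup => //; exists q.
have [hpd|hpd] := lerP (p - d) q.
  have [h1 h2] := RA_zero ha hd q0 hqp (le_trans hpL L1) hpd.
  by split; apply: (@le_trans _ _ 0%:E); (try exact: h1); (try exact: h2); rewrite lee_fin.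
set L := sup S in hpL L1.
set xL := (L - d) / (1 - d).
set zm := q / (1 - d).
have hA : forall eta, 0 < eta -> exists x, [/\ zm < x, x <= xL,
     (renyi a (ber x) (ber zm) <= e%:E)%E & (renyi a (ber zm) (ber x) <= e%:E)%E] /\ xL - eta < x.
  move=> eta eta0.
  have [th [th0 m1 m2]] : exists th, [/\ 0 < th, th <= L - d - q & th <= eta * (1 - d)].
    exists (Num.min (L - d - q) (eta * (1 - d))); split.
    - by rewrite lt_min; apply/andP; split; [lra | apply: mulr_gt0].
    - by rewrite ge_min lexx.
    - by rewrite ge_min lexx orbT.
  have [p0 Sp0 hp0] := sup_adherent th0 hs.
  rewrite -/L in hp0.
  have p0L : p0 <= L by apply: sup_upper_bound.
  case: Sp0 => hq0' hp01' r1 r2.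
  have hp01 : p0 <= 1 by exact: hp01'.
  have hqd : q + d < p0 by lra.
  have [c1 c2] := RA_canon ha hd q0 hqd hp01.
  exists ((p0 - d) / (1 - d)); split; first split.
  - by rewrite /zm ltr_pM2r ?invr_gt0 //; lra.
  - by rewrite /xL ler_pM2r ?invr_gt0 //; lra.
  - by rewrite -c1.
  - by rewrite -c2.
  - rewrite /xL (_ : (L - d) / (1 - d) - eta = (L - eta * (1 - d) - d) / (1 - d)); last first.
      by field; rewrite gt_eqF.
    by rewrite ltr_pM2r ?invr_gt0 //; lra.
have [x1 [[zx1 x1L _ _] _]] := hA 1 ltr01.
have zm0 : 0 <= zm by apply: divr_ge0; lra.
have zm1 : zm < 1 by rewrite /zm ltr_pdivrMr // mul1r; lra.
have xL1 : xL <= 1 by apply: div_le1; lra.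
have zmpos : 0 < zm.
  rewrite lt_neqAle zm0 andbT; apply/negP => /eqP zm00.
  have [x [[zx xx r1 _] _]] := hA 1 ltr01.
  rewrite -zm00 in zx r1.
  move: r1; rewrite renyi_ber_z0 //; (try by rewrite leye_eq); lra.
pose E := expR ((a - 1) * e).
have K2 : Tr xL zm <= E.
  apply: (approx_le (C := a * zm `^ (1 - a))); first by apply: mulr_ge0; [lra | exact: powR_ge0].
  move=> eta eta0; have [x [[zx xxL r1 _] hx]] := hA eta eta0.
  exists (xL - x); split; [lra | lra |].
  have hz : 0 < zm < 1 by apply/andP; split.
  have T1 := Lip1 ha hz (ltW (le_lt_trans zm0 zx)) xxL xL1.
  have hx01 : 0 <= x <= 1 by apply/andP; split; lra.
  rewrite renyi_ber // in r1.
  have T2 := F_le_E ha (Tr_gt0 ha hx01 hz) r1.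
  rewrite /E; lra.
have K3 : xL < 1.
  rewrite lt_neqAle xL1 andbT; apply/negP => /eqP xL01.
  pose M := E / (1 - zm) `^ a.
  have zpa : 0 < (1 - zm) `^ a by apply: powR_gt0; lra.
  have M0 : 0 <= M by apply: divr_ge0; [exact: ltW (expR_gt0 _) | exact: ltW].
  pose eta := ((M + 1)^-1) `^ ((a - 1)^-1).
  have eta0 : 0 < eta by apply: powR_gt0; rewrite invr_gt0; lra.
  have [x [[zx xxL _ r2] hx]] := hA eta eta0.
  have [x1'|xn1] := eqVneq x 1.
    by rewrite x1' renyi_ber_x1 // in r2; lra.
  have xlt1 : x < 1 by rewrite lt_neqAle xn1 /=; lra.
  have hzm01 : 0 <= zm <= 1 by apply/andP; split; lra.
  have hx01 : 0 < x < 1 by apply/andP; split; lra.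
  rewrite renyi_ber // in r2.
  have T2 := F_le_E ha (Tr_gt0 ha hzm01 hx01) r2.
  have hh0 : 0 < 1 - x by lra.
  have hheta : 1 - x < eta by lra.
  have pe : eta `^ (a - 1) = (M + 1)^-1.
    rewrite /eta -powRrM mulVf ?gt_eqF // powRr1 // invr_ge0; lra.
  have hp1 : (1 - x) `^ (a - 1) < (M + 1)^-1.
    rewrite -pe; apply: gt0_ltr_powR => //; rewrite nnegrE; lra.
  have hp2 : M + 1 < (1 - x) `^ (1 - a).
    have -> : 1 - a = - (a - 1) by ring.
    rewrite powRN -[M + 1]invrK ltf_pV2 ?posrE ?invr_gt0 ?powR_gt0 //; lra.
  have T3 : (1 - zm) `^ a * (1 - x) `^ (1 - a) <= Tr zm x.
    rewrite /Tr -[X in X <= _]add0r lerD2r; apply: mulr_ge0; exact: powR_ge0.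
  have T4 : (1 - zm) `^ a * (M + 1) < (1 - zm) `^ a * (1 - x) `^ (1 - a) by rewrite ltr_pM2l.
  have T5 : (1 - zm) `^ a * M = E by rewrite /M; field; rewrite gt_eqF.
  rewrite /E in T2 T5; nra.
have K4 : Tr zm xL <= E.
  apply: (approx_le (C := (1 - zm) `^ a * (a - 1) * ((1 - xL) `^ (1 - a) / (1 - xL)))).
    apply: mulr_ge0; last by apply: divr_ge0; [exact: powR_ge0 | lra].
    by apply: mulr_ge0; [exact: powR_ge0 | lra].
  move=> eta eta0; have [x [[zx xxL _ r2] hx]] := hA eta eta0.
  exists (xL - x); split; [lra | lra |].
  have T1 := Lip2 ha zm0 zm1 (le_lt_trans zm0 zx) xxL K3.
  have hzm01 : 0 <= zm <= 1 by apply/andP; split; lra.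
  have hx01 : 0 < x < 1 by apply/andP; split; lra.
  rewrite renyi_ber // in r2.
  have T2 := F_le_E ha (Tr_gt0 ha hzm01 hx01) r2.
  rewrite /E; lra.
have hqd : q + d < p by lra.
have hp1 : p <= 1 by lra.
have [c1 c2] := RA_canon ha hd q0 hqd hp1.
set xp := (p - d) / (1 - d) in c1 c2.
rewrite -/zm in c1 c2.
have zxp : zm < xp by rewrite /zm /xp ltr_pM2r ?invr_gt0 //; lra.
have xpL : xp <= xL by rewrite /xL /xp ler_pM2r ?invr_gt0 //; lra.
have hz : 0 < zm < 1 by apply/andP; split.
have hxp : 0 <= xp <= 1 by apply/andP; split; lra.
have hxp' : 0 < xp < 1 by apply/andP; split; lra.
have hzm01 : 0 <= zm <= 1 by apply/andP; split; lra.
rewrite c1 c2 !renyi_ber //; split; apply: E_le_F => //.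
- exact: Tr_gt0.
- apply: le_trans K2; apply: M1 => //; lra.
- exact: Tr_gt0.
- apply: le_trans K4; apply: M3 => //; lra.
Qed.

End P3b.

Section P4.
Variable R : realType.
Variable a : R.
Hypothesis ha : 1 < a.

Lemma RA_mono_d (T : finType) (P Q : T -> R) (d d' : R) : 0 <= d -> d <= d' -> d' < 1 ->
  (renyi_approx a d' P Q <= renyi_approx a d P Q)%E.
Proof.
move=> d0 dd d1.
have [d'0|d'0] := eqVneq d' 0.
  have -> : d = d' by lra.
  by [].
have d'p : 0 < d' by rewrite lt_neqAle eq_sym d'0 /=; lra.
apply: le_ereal_inf_tmp => e [P' [P'' [Q' [Q'' [dP' dP'' dQ' dQ'' [eP eQ ->]]]]]].
apply: ereal_inf_lbound.
have mk : forall F F' : T -> R, is_distr F -> is_distr F' ->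
    is_distr (fun x => ((d' - d) * F x + d * F' x) / d').
  move=> F F' [F0 F1] [F'0 F'1]; split.
    move=> x; apply: divr_ge0; last lra.
    apply: addr_ge0; apply: mulr_ge0 => //; lra.
  rewrite -big_distrl /= big_split /= -!big_distrr /= F1 F'1.
  by rewrite !mulr1 subrK mulfV.
exists P', (fun x => ((d' - d) * P' x + d * P'' x) / d'), Q',
  (fun x => ((d' - d) * Q' x + d * Q'' x) / d'); split => //; try exact: mk.
split => // x; [rewrite eP | rewrite eQ]; field; by rewrite gt_eqF.
Qed.

Lemma RA_big_d (T : finType) (P Q : T -> R) (d' : R) : is_distr P -> is_distr Q -> 1 <= d' ->
  (renyi_approx a d' P Q <= 0%:E)%E.
Proof.
move=> dP dQ d1.
have d'p : 0 < d' by lra.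
rewrite -(renyi_self ha dP).
apply: ereal_inf_lbound.
exists P, P, P, (fun x => (Q x - (1 - d') * P x) / d'); split => //.
  case: dP dQ => [P0 P1] [Q0 Q1]; split.
    move=> x; apply: divr_ge0; last lra.
    have := P0 x; have := Q0 x; nra.
  rewrite -big_distrl /= sumrB -big_distrr /= P1 Q1.
  by rewrite mulr1 opprB addrCA subrr addr0 mulfV ?gt_eqF.
split => // x; first by ring.
field; by rewrite gt_eqF.
Qed.

Lemma RA_mono (T : finType) (P Q : T -> R) (d d' e : R) : is_distr P -> is_distr Q ->
  0 <= d -> d <= d' -> 0 <= e ->
  (renyi_approx a d P Q <= e%:E)%E -> (renyi_approx a d' P Q <= e%:E)%E.
Proof.
move=> dP dQ d0 dd e0 h.
have [d1|d1] := ltP d' 1.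
  exact: le_trans (RA_mono_d P Q d0 dd d1) h.
apply: le_trans (RA_big_d dP dQ d1) _; by rewrite lee_fin.
Qed.

Lemma Lfun_bounds (q e d : R) : 0 <= q <= 1 -> 0 <= e ->
  q <= Defs.Lfun a q e d /\ Defs.Lfun a q e d <= 1.
Proof.
move=> hq e0; rewrite /Defs.Lfun; set S := [set p : R | _]%classic.
have Sq : S q.
  split; [exact: lexx | by case/andP: hq | |];
  by apply: (@le_trans _ _ 0%:E); [exact: RA_refl | rewrite lee_fin].
have ubS : ubound S 1 by move=> y [].
have hs : has_sup S by split; [exists q | exists 1].
split; first exact: sup_upper_bound.
by apply: ge_sup => //; exists q.
Qed.

Lemma Lfun_mono (q e e' d d' : R) : 0 <= q <= 1 -> 0 <= e -> e <= e' -> 0 <= d -> d <= d' ->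
  Defs.Lfun a q e d <= Defs.Lfun a q e' d'.
Proof.
move=> hq e0 ee d0 dd; rewrite /Defs.Lfun.
set S := [set p : R | _]%classic; set S' := [set p : R | _]%classic.
have e'0 : 0 <= e' by exact: le_trans ee.
have SS : forall x, S x -> S' x.
  move=> x [h1 h2 r1 r2].
  have hx : 0 <= x <= 1 by apply/andP; split => //; case/andP: hq => ? _; exact: le_trans h1.
  split => //.
  - apply: le_trans (_ : e%:E <= e'%:E)%E; last by rewrite lee_fin.
    exact: (RA_mono (ber_distr hx) (ber_distr hq) d0 dd e0 r1).
  - apply: le_trans (_ : e%:E <= e'%:E)%E; last by rewrite lee_fin.
    exact: (RA_mono (ber_distr hq) (ber_distr hx) d0 dd e0 r2).
have Sq : S q.
  split; [exact: lexx | by case/andP: hq | |];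
  by apply: (@le_trans _ _ 0%:E); [exact: RA_refl | rewrite lee_fin].
have ubS : ubound S' 1 by move=> y [].
have hs : has_sup S' by split; [exists q; exact: SS | exists 1].
apply: sup_le => //; last by exists q.
by move=> x Sx; exists x; split; [exact: SS | exact: lexx].
Qed.

End P4.

Section P5.
Variable R : realType.
Variables (a e0 d0 r e1 d1 Dd D : R).
Hypotheses (ha : 1 < a) (he0 : 0 < e0) (hd0 : 0 < d0) (hr : 0 < r)
  (he1 : 0 < e1) (hd1 : 0 < d1) (hDd : 0 < Dd) (hD : 0 < D).

Local Notation ps := (psi a e0 d0 r e1 d1 Dd D).
Local Notation pseq := (psi_seq a e0 d0 r e1 d1 Dd D).
Local Notation N := (Ndisc D Dd).
Definition epsj (j : nat) := e0 + e1 * (Dd * j%:R) `^ r.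
Definition delj (j : nat) := d0 + d1 * (Dd * j%:R) `^ r.

Lemma size_pseq n : size (pseq n) = n.+1.
Proof. by elim: n => [|n IH] //=; rewrite size_rcons IH. Qed.

Lemma nth_pseq_step n k : (k <= n)%N -> nth 0 (pseq n.+1) k = nth 0 (pseq n) k.
Proof. by move=> kn; rewrite /= nth_rcons size_pseq ltnS kn. Qed.

Lemma nth_pseq n k : (k <= n)%N -> nth 0 (pseq n) k = ps k.
Proof.
elim: n => [|n IH] kn.
  by move: kn; rewrite leqn0 => /eqP ->.
case: (ltngtP k n.+1) kn => // [kn' _|-> _].
  by rewrite nth_pseq_step // IH.
by [].
Qed.

Lemma psi0 : ps 0 = 0.
Proof. by []. Qed.

Lemma psi_rec n : ps n.+1 =
  \big[Order.min/1]_(j < minn n.+1 N) Defs.Lfun a (ps (n - j)) (epsj j) (delj j).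
Proof.
rewrite /psi /= nth_rcons size_pseq ltnn eqxx.
apply: eq_bigr => j _; rewrite subSS nth_pseq // leq_subr //.
Qed.

Lemma epsj_ge0 j : 0 <= epsj j.
Proof. by rewrite /epsj addr_ge0 ?mulr_ge0 ?powR_ge0 //; apply: ltW. Qed.

Lemma delj_ge0 j : 0 <= delj j.
Proof. by rewrite /delj addr_ge0 ?mulr_ge0 ?powR_ge0 //; apply: ltW. Qed.

Lemma powj_mono (i j : nat) : (i <= j)%N -> (Dd * i%:R) `^ r <= (Dd * j%:R) `^ r.
Proof.
move=> ij; apply: ge0_ler_powR; first exact: ltW.
- by rewrite nnegrE mulr_ge0 // ltW.
- by rewrite nnegrE mulr_ge0 // ltW.
- by rewrite ler_pM2l // ler_nat.
Qed.

Lemma epsj_mono (i j : nat) : (i <= j)%N -> epsj i <= epsj j.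
Proof. by move=> ij; rewrite /epsj lerD2l ler_pM2l // powj_mono. Qed.

Lemma delj_mono (i j : nat) : (i <= j)%N -> delj i <= delj j.
Proof. by move=> ij; rewrite /delj lerD2l ler_pM2l // powj_mono. Qed.

Lemma psi_range n : 0 <= ps n <= 1.
Proof.
elim/ltn_ind: n => -[|n] IH.
  by rewrite psi0 lexx ler01.
rewrite psi_rec.
apply: (big_ind (fun x => 0 <= x <= 1)).
- by rewrite ler01 lexx.
- move=> x y hx hy; rewrite /Order.min; by case: ifP.
- move=> j _.
  have hq := IH (n - j)%N (leq_ltn_trans (leq_subr _ _) (ltnSn _)).
  have [h1 h2] := Lfun_bounds ha (delj j) hq (epsj_ge0 j).
  apply/andP; split => //; case/andP: hq => hq0 _; exact: le_trans h1.
Qed.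

Lemma psi_le_L n k : (0 < k)%N -> (k <= minn n N)%N ->
  ps n <= Defs.Lfun a (ps (n - k)) (epsj k.-1) (delj k.-1).
Proof.
case: n => [|m] k0 kn.
  by move: kn; rewrite min0n leqn0 => /eqP k00; rewrite k00 in k0.
rewrite psi_rec.
have kl : (k.-1 < minn m.+1 N)%N by rewrite prednK.
have := bigmin_le 1 (Ordinal kl) (fun j : 'I_(minn m.+1 N) => Defs.Lfun a (ps (m - j)) (epsj j) (delj j)).
by rewrite /= (_ : (m - k.-1 = m.+1 - k)%N) //; case: k k0 {kn kl} => // k _; rewrite subSS.
Qed.

Lemma psi_mono n : ps n <= ps n.+1.
Proof.
rewrite psi_rec; apply: le_bigmin; first by case/andP: (psi_range n).
move=> j _.
case: j => -[|j] /= hj.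
  by rewrite subn0; have [] := Lfun_bounds ha (delj 0) (psi_range n) (epsj_ge0 0).
have hjn : (j.+1 <= minn n N)%N.
  move: hj; rewrite !leq_min ltnS => /andP[h1 h2]; apply/andP; split => //; exact: ltnW.
apply: le_trans (psi_le_L (ltn0Sn j) hjn) _.
apply: Lfun_mono => //.
- exact: psi_range.
- exact: epsj_ge0.
- exact: epsj_mono.
- exact: delj_ge0.
- exact: delj_mono.
Qed.

Lemma psi_monoT m n : (m <= n)%N -> ps m <= ps n.
Proof.
elim: n => [|n IH]; first by rewrite leqn0 => /eqP ->.
rewrite leq_eqVlt => /orP[/eqP ->|]; first exact: lexx.
by rewrite ltnS => /IH h; exact: le_trans h (psi_mono n).
Qed.

Lemma Bern_pair (Dinf : R) (n m : nat) : (m <= n)%N -> (n - m <= N)%N ->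
  ((0 < n - m)%N -> Dd * (n - m).-1%:R <= Dinf) -> 0 <= Dinf -> d0 + d1 * Dinf `^ r < 1 ->
  (renyi_approx a (d0 + d1 * Dinf `^ r) (ber (ps n)) (ber (ps m)) <= (e0 + e1 * Dinf `^ r)%:E)%E /\
  (renyi_approx a (d0 + d1 * Dinf `^ r) (ber (ps m)) (ber (ps n)) <= (e0 + e1 * Dinf `^ r)%:E)%E.
Proof.
move=> mn kN hk Di0 hdl.
have eps0 : 0 <= e0 + e1 * Dinf `^ r.
  by apply: addr_ge0; [exact: ltW | apply: mulr_ge0; [exact: ltW | exact: powR_ge0]].
have dst0 : 0 <= d0 + d1 * Dinf `^ r.
  by apply: addr_ge0; [exact: ltW | apply: mulr_ge0; [exact: ltW | exact: powR_ge0]].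
have [k0|kpos] := posnP (n - m).
  have nm : n = m by apply/eqP; rewrite eqn_leq mn andbT -subn_eq0 k0.
  by rewrite nm; split; apply: le_trans (RA_refl ha _ (psi_range m)) _; rewrite lee_fin.
have kn : (n - m <= minn n N)%N by rewrite leq_min leq_subr kN.
have hL := psi_le_L kpos kn; rewrite (subKn mn) in hL.
have hmn := psi_monoT mn.
have hpow : (Dd * (n - m).-1%:R) `^ r <= Dinf `^ r.
  apply: ge0_ler_powR; first exact: ltW.
  - by rewrite nnegrE mulr_ge0 // ltW.
  - by rewrite nnegrE.
  - exact: hk.
have dle : delj (n - m).-1 <= d0 + d1 * Dinf `^ r by rewrite /delj lerD2l ler_pM2l.
have ele : epsj (n - m).-1 <= e0 + e1 * Dinf `^ r by rewrite /epsj lerD2l ler_pM2l.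
have dpos : 0 < delj (n - m).-1.
  by rewrite /delj; apply: ltr_wpDr => //; apply: mulr_ge0; [exact: ltW | exact: powR_ge0].
have dl1 : delj (n - m).-1 < 1 by exact: le_lt_trans dle hdl.
have hd : 0 < delj (n - m).-1 < 1 by apply/andP; split.
have [c1 c2] := closed_L ha hd (psi_range m) (epsj_ge0 _) hmn hL.
have G : forall (P Q : bool -> R), is_distr P -> is_distr Q ->
    (renyi_approx a (delj (n - m).-1) P Q <= (epsj (n - m).-1)%:E)%E ->
    (renyi_approx a (d0 + d1 * Dinf `^ r) P Q <= (e0 + e1 * Dinf `^ r)%:E)%E.
  move=> P Q dP dQ h.
  apply: le_trans (RA_mono ha dP dQ (ltW dpos) dle (epsj_ge0 _) h) _.
  by rewrite lee_fin.
split; apply: G => //; exact: ber_distr (psi_range _).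
Qed.

End P5.

Section P6.
Variable R : realType.
Variable a : R.
Hypothesis ha : 1 < a.

Definition prodD (U : finType) (G : U -> bool -> R) : {set U} -> R :=
  fun S => \prod_(v : U) G v (v \in S).

Lemma sum_prodD (U : finType) (G : U -> bool -> R) :
  \sum_(S : {set U}) prodD G S = \prod_(v : U) \sum_(b : bool) G v b.
Proof.
rewrite bigA_distr_bigA.
rewrite (reindex (fun S : {set U} => [ffun v => v \in S])) /=.
  by apply: eq_bigr => S _; rewrite /prodD; apply: eq_bigr => v _; rewrite ffunE.
apply: onW_bij; exists (fun f : {ffun U -> bool} => [set v | f v]).
  by move=> S; apply/setP => v; rewrite inE ffunE.
by move=> f; apply/ffunP => v; rewrite ffunE inE.
Qed.

Lemma renyi_term_ge0 (x y : R) : 0 <= x -> 0 <= y -> (0%:E <= renyi_term a x y)%E.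
Proof.
move=> x0 y0; rewrite /renyi_term; case: (y == 0); case: (x == 0) => //=;
  by rewrite ?leey ?lee_fin ?mulr_ge0 ?powR_ge0.
Qed.

Lemma renyi_inf (T : finType) (P Q : T -> R) (t : T) : (forall x, 0 <= P x) -> (forall x, 0 <= Q x) ->
  Q t = 0 -> P t != 0 -> renyi a P Q = +oo%E.
Proof.
move=> P0 Q0 qt pt; rewrite /renyi (bigD1 t) //= {1}/renyi_term qt eqxx (negbTE pt).
rewrite addye //.
have : (0%:E <= \sum_(i | i != t) renyi_term a (P i) (Q i))%E.
  by apply: sume_ge0 => i _; exact: renyi_term_ge0.
by case: (\sum_(i | i != t) _)%E.
Qed.

Lemma term_fin (x y : R) : 0 <= x -> 0 <= y -> (y = 0 -> x = 0) ->
  renyi_term a x y = (x `^ a * y `^ (1 - a))%:E.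
Proof.
have ha1 : 0 < a - 1 by rewrite subr_gt0.
move=> x0 y0 h; rewrite /renyi_term.
have [y00|yn0] := eqVneq y 0; last by [].
rewrite (h y00) eqxx powR0 ?mul0r //; apply/eqP; lra.
Qed.

Section Tensor.
Variables (U : finType) (u : U) (W : U -> bool -> R).
Hypothesis hW : forall v, is_distr (W v).

Definition Hf (h : bool -> R) : U -> bool -> R := fun v => if v == u then h else W v.
Definition Wp (S : {set U}) := \prod_(v | v != u) W v (v \in S).

Lemma Wp_ge0 S : 0 <= Wp S.
Proof. by apply: prodr_ge0 => v _; case: (hW v) => h _; exact: h. Qed.

Lemma prodD_Hf h S : prodD (Hf h) S = h (u \in S) * Wp S.
Proof.
rewrite /prodD (bigD1 u) //= /Hf eqxx; congr (_ * _).
by apply: eq_bigr => v vu; rewrite (negbTE vu).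
Qed.

Lemma sum_Hf h : \sum_(S : {set U}) prodD (Hf h) S = \sum_(b : bool) h b.
Proof.
rewrite sum_prodD (bigD1 u) //= /Hf eqxx [X in _ * X]big1 ?mulr1 // => v vu.
by rewrite (negbTE vu); case: (hW v).
Qed.

Lemma Hf_distr h : is_distr h -> forall v, is_distr (Hf h v).
Proof. by move=> hh v; rewrite /Hf; case: eqP. Qed.

Lemma prodD_distr (G : U -> bool -> R) : (forall v, is_distr (G v)) -> is_distr (prodD G).
Proof.
move=> hG; split.
  by move=> S; apply: prodr_ge0 => v _; case: (hG v) => h _; exact: h.
by rewrite sum_prodD big1 // => v _; case: (hG v).
Qed.

Lemma renyi_prod (B C : bool -> R) : is_distr B -> is_distr C ->
  (renyi a (prodD (Hf B)) (prodD (Hf C)) <= renyi a B C)%E.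
Proof.
have ha1 : 0 < a - 1 by rewrite subr_gt0.
have an0 : a != 0 by apply/eqP; lra.
move=> dB dC.
have [B0 _] := dB; have [C0 _] := dC.
have [/existsP[b /andP[/eqP cb bb]]|] := boolP [exists b, (C b == 0) && (B b != 0)].
  by rewrite (renyi_inf B0 C0 cb bb) leey.
rewrite negb_exists => /forallP hbc.
have hz : forall b, C b = 0 -> B b = 0.
  move=> b cb; have := hbc b; rewrite cb eqxx /= negbK => /eqP //.
pose h b := B b `^ a * C b `^ (1 - a).
have E1 : (\sum_(b : bool) renyi_term a (B b) (C b) = (\sum_(b : bool) h b)%:E)%E.
  rewrite -sumEFin; apply: eq_bigr => b _.
  by apply: term_fin; (try exact: ha); (try exact: B0); (try exact: C0); exact: hz.
have E2 : (\sum_(S : {set U}) renyi_term a (prodD (Hf B) S) (prodD (Hf C) S)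
          = (\sum_(b : bool) h b)%:E)%E.
  rewrite -sum_Hf -sumEFin; apply: eq_bigr => S _.
  rewrite !prodD_Hf term_fin; first last.
  - move=> /eqP; rewrite mulf_eq0 => /orP[/eqP c0|/eqP w0].
      by rewrite (hz _ c0) mul0r.
    by rewrite w0 mulr0.
  - exact: mulr_ge0 (C0 _) (Wp_ge0 S).
  - exact: mulr_ge0 (B0 _) (Wp_ge0 S).
  congr (_%:E).
  have w0 := Wp_ge0 S.
  rewrite !powRM // /h.
  have eW : Wp S `^ a * Wp S `^ (1 - a) = Wp S.
    have [->|wn0] := eqVneq (Wp S) 0.
      by rewrite powR0 ?mul0r.
    rewrite -powRD; last by apply/implyP => _.
    by rewrite addrC subrK powRr1.
  by rewrite mulrACA eW.
by rewrite /renyi E1 E2.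
Qed.

End Tensor.

Lemma tensor (U : finType) (u : U) (f : R -> R) (X X' : U -> R) (d : R) :
  (forall v, v != u -> X v = X' v) -> (forall v, 0 <= f (X v) <= 1) -> (forall v, 0 <= f (X' v) <= 1) ->
  (renyi_approx a d (mech f X) (mech f X') <=
     renyi_approx a d (ber (f (X u))) (ber (f (X' u))))%E.
Proof.
move=> hd hX hX'.
pose W v := ber (f (X v)).
have hW : forall v, is_distr (W v) by move=> v; exact: ber_distr.
have mX : mech f X = prodD (Hf u W (ber (f (X u)))).
  apply: funext => S; rewrite /mech /prodD; apply: eq_bigr => v _.
  by rewrite /Hf; case: eqP => [->|_].
have mX' : mech f X' = prodD (Hf u W (ber (f (X' u)))).
  apply: funext => S; rewrite /mech /prodD; apply: eq_bigr => v _.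
  rewrite /Hf; case: eqP => [->|/eqP vu] //.
  by rewrite /W hd.
rewrite mX mX'.
apply: le_ereal_inf_tmp => e [B' [B'' [C' [C'' [dB' dB'' dC' dC'' [eB eC ->]]]]]].
apply: (le_trans _ (renyi_prod u hW dB' dC')).
apply: ereal_inf_lbound.
exists (prodD (Hf u W B')), (prodD (Hf u W B'')), (prodD (Hf u W C')), (prodD (Hf u W C'')).
split; try (apply: prodD_distr; apply: Hf_distr) => //.
split => // S; rewrite !prodD_Hf // ?eB ?eC; ring.
Qed.

End P6.

Section P7.
Variable R : realType.

Lemma absz_real (z : int) : (0 <= z)%R -> ((`|z|%N)%:R : R) = z%:~R.
Proof. by case: z => //= n _. Qed.

Lemma floor_gap (Dd D x y Dinf : R) : 0 < Dd -> 0 < D -> 0 <= y -> y <= x -> x - y <= Dinf -> Dinf <= D ->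
  [/\ (`|Num.floor (y / Dd)|%N <= `|Num.floor (x / Dd)|%N)%N,
      (`|Num.floor (x / Dd)|%N - `|Num.floor (y / Dd)|%N <= Ndisc D Dd)%N &
      ((0 < `|Num.floor (x / Dd)|%N - `|Num.floor (y / Dd)|%N)%N ->
         Dd * (`|Num.floor (x / Dd)|%N - `|Num.floor (y / Dd)|%N).-1%:R <= Dinf)].
Proof.
move=> Dd0 D0 y0 yx hxy hD.
set n := `|Num.floor (x / Dd)|%N; set m := `|Num.floor (y / Dd)|%N.
have y'0 : 0 <= y / Dd by apply: divr_ge0 => //; exact: ltW.
have x'0 : 0 <= x / Dd by apply: divr_ge0; [lra | exact: ltW].
have fy0 : (0 <= Num.floor (y / Dd))%R by rewrite floor_ge0.
have fx0 : (0 <= Num.floor (x / Dd))%R by rewrite floor_ge0.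
have hn : (n%:R : R) = (Num.floor (x / Dd))%:~R by rewrite absz_real.
have hm : (m%:R : R) = (Num.floor (y / Dd))%:~R by rewrite absz_real.
have [fx1 fx2] := andP (floor_itv (x / Dd)).
have [fy1 fy2] := andP (floor_itv (y / Dd)).
rewrite intrD -hn in fx1 fx2; rewrite intrD -hm in fy1 fy2.
have mn : (m <= n)%N.
  rewrite -(ler_nat R) hn hm ler_int; apply: le_floor.
  by rewrite ler_pM2r ?invr_gt0.
have hk : ((n - m)%:R : R) = n%:R - m%:R by rewrite natrB.
have hxyD : (x - y) / Dd = x / Dd - y / Dd by rewrite mulrBl.
have hk2 : ((n - m)%:R : R) < (x - y) / Dd + 1 by rewrite hk hxyD; lra.
have hDD : (x - y) / Dd <= D / Dd by rewrite ler_pM2r ?invr_gt0 //; lra.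
split => //.
- have c0 : (0 <= Num.ceil (D / Dd))%R by rewrite ceil_ge0; apply: lt_le_trans (ltrN10 R) _; apply: divr_ge0; exact: ltW.
  have hN : ((Ndisc D Dd)%:R : R) = (Num.ceil (D / Dd))%:~R by rewrite /Ndisc absz_real.
  have cge := ceil_ge (D / Dd).
  rewrite -ltnS -(ltr_nat R) mulrSr hN; lra.
- move=> k0.
  have hk1 : ((n - m).-1%:R : R) = (n - m)%:R - 1.
    by rewrite -{2}(prednK k0) mulrSr addrK.
  rewrite hk1.
  have : (n - m)%:R - 1 < (x - y) / Dd by lra.
  rewrite ltr_pdivlMr // => h.
  rewrite mulrC; apply: ltW; lra.
Qed.

End P7.

Unset Implicit Arguments. Set Strict Implicit.

Theorem mainTheorem5 (R : realType) (U : finType)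
  (a e0 d0 r e1 d1 Dd D : R)
  (ha : 1 < a) (he0 : 0 < e0) (hd0 : 0 < d0) (hr : 0 < r)
  (he1 : 0 < e1) (hd1 : 0 < d1) (hDd : 0 < Dd) (hD : 0 < D)
  (X X' : U -> R) (u : U) (Dinf : R)
  (hX : forall v, 0 <= X v) (hX' : forall v, 0 <= X' v)
  (hdiff : forall v, v != u -> X v = X' v)
  (hu : `|X u - X' u| <= Dinf) (hDinf : Dinf <= D)
  (hdelta : d0 + d1 * Dinf `^ r < 1) :
  (maxe (renyi_approx a (d0 + d1 * Dinf `^ r)
           (mech (phi a e0 d0 r e1 d1 Dd D) X)
           (mech (phi a e0 d0 r e1 d1 Dd D) X'))
        (renyi_approx a (d0 + d1 * Dinf `^ r)
           (mech (phi a e0 d0 r e1 d1 Dd D) X')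
           (mech (phi a e0 d0 r e1 d1 Dd D) X))
   <= (e0 + e1 * Dinf `^ r)%:E)%E.
Proof.
set ph := phi a e0 d0 r e1 d1 Dd D.
have hph : forall y, 0 <= ph y <= 1 by move=> y; rewrite /ph /phi; apply: psi_range.
have Di0 : 0 <= Dinf by exact: le_trans (normr_ge0 _) hu.
have hdiff' : forall v, v != u -> X' v = X v by move=> v hv; rewrite hdiff.
have T1 := tensor ha (d0 + d1 * Dinf `^ r) hdiff (fun v => hph (X v)) (fun v => hph (X' v)).
have T2 := tensor ha (d0 + d1 * Dinf `^ r) hdiff' (fun v => hph (X' v)) (fun v => hph (X v)).
rewrite /ph /phi in T1 T2.
have hu' := hu; rewrite ler_norml in hu'; case/andP: hu' => hu1 hu2.
rewrite ge_max; apply/andP; split.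
- case: (lerP (X' u) (X u)) => hxx.
  + have hg : X u - X' u <= Dinf by [].
    have [mn kN hk] := floor_gap hDd hD (hX' u) hxx hg hDinf.
    have [B1 B2] := Bern_pair ha he0 hd0 hr he1 hd1 hDd mn kN hk Di0 hdelta.
    exact: le_trans T1 B1.
  + have hg : X' u - X u <= Dinf by lra.
    have [mn kN hk] := floor_gap hDd hD (hX u) (ltW hxx) hg hDinf.
    have [B1 B2] := Bern_pair ha he0 hd0 hr he1 hd1 hDd mn kN hk Di0 hdelta.
    exact: le_trans T1 B2.
- case: (lerP (X' u) (X u)) => hxx.
  + have hg : X u - X' u <= Dinf by [].
    have [mn kN hk] := floor_gap hDd hD (hX' u) hxx hg hDinf.
    have [B1 B2] := Bern_pair ha he0 hd0 hr he1 hd1 hDd mn kN hk Di0 hdelta.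
    exact: le_trans T2 B2.
  + have hg : X' u - X u <= Dinf by lra.
    have [mn kN hk] := floor_gap hDd hD (hX u) (ltW hxx) hg hDinf.
    have [B1 B2] := Bern_pair ha he0 hd0 hr he1 hd1 hDd mn kN hk Di0 hdelta.
    exact: le_trans T2 B1.
Qed.
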